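(* Let $n\ge2$. For every $l\in\mathbb{Z}$, $$X^{(n)}_l=\frac{1}{d_n}\sum_{\kappa\in I'_n}p_n\!\left(\mathbf{e}\!\left[\omega^{(n)}_{\kappa,1}\right]\right)\mathbf{e}\!\left[\omega^{(n)}_{\kappa,1}\cdot l\right]+\frac{1}{a_n}X^{(n-2)}_l.$$
   Context: Fix integers $a_1,a_2,\ldots\ge2$, $d_0=1$, $d_i=a_1\cdots a_i$, $\mathbf{e}[\alpha]=\exp(2\pi\sqrt{-1}\alpha)$. $I'_n=\{\kappa\in\{1,\dots,d_n\}\mid a_n\nmid\kappa\}$; $\omega^{(n)}_{\kappa,1}=\frac{\kappa}{d_n}-\lfloor\frac{\kappa}{d_n}\rfloor$. $p_n(t)=\prod_{i=1}^n(1-t^{d_{i-1}})^{(-1)^{n-i}}$ for $n\ge1$ (a polynomial), $p_0(t)=1$. For $n\ge1$ and $l\in\mathbb{Z}$, $X^{(n)}_l:=\frac{1}{d_n}\sum_{a=1}^{d_n}p_n(\mathbf{e}[\frac{a}{d_n}])\mathbf{e}[\frac{a}{d_n}l]$, and $X^{(0)}_l:=1$. *)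

(* Defs.v *)
From HB Require Import structures.
From mathcomp Require Import all_boot all_order all_algebra.
From mathcomp Require Import reals trigo.
From mathcomp Require Import complex.
Set Implicit Arguments. Unset Strict Implicit. Unset Printing Implicit Defensive.
Import Order.TTheory GRing.Theory Num.Theory.
Local Open Scope ring_scope.

Definition dd (a : nat -> nat) (i : nat) : nat := (\prod_(1 <= j < i.+1) a j)%N.

(* e[alpha] = exp(2 pi sqrt(-1) alpha) = cos(2 pi alpha) + i sin(2 pi alpha) *)
Definition ee (R : realType) (x : R) : R[i] :=
  Complex (cos (2 * pi * x)) (sin (2 * pi * x)).

(* p_n(t) = prod_{i=1}^n (1 - t^{d_{i-1}})^{(-1)^{n-i}}, as a polynomial:
   (product of factors with n-i even) divided (exactly) by
   (product of factors with n-i odd); p_0 = 1. *)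
Definition pnum (R : realType) (a : nat -> nat) (n : nat) : {poly R[i]} :=
  \prod_(1 <= i < n.+1 | ~~ odd (n - i)) (1 - 'X^(dd a i.-1)).
Definition pden (R : realType) (a : nat -> nat) (n : nat) : {poly R[i]} :=
  \prod_(1 <= i < n.+1 | odd (n - i)) (1 - 'X^(dd a i.-1)).
Definition pp (R : realType) (a : nat -> nat) (n : nat) : {poly R[i]} :=
  if n is 0 then 1 else pnum R a n %/ pden R a n.

Definition omega (R : realType) (a : nat -> nat) (n k : nat) : R :=
  k%:R / (dd a n)%:R - (Num.floor (k%:R / (dd a n)%:R : R))%:~R.

Definition XX (R : realType) (a : nat -> nat) (n : nat) (l : int) : R[i] :=
  if n is 0 then 1 else
  ((dd a n)%:R)^-1 * \sum_(1 <= b < (dd a n).+1)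
     (pp R a n).[ee (b%:R / (dd a n)%:R : R)] *
       ee ((b%:R / (dd a n)%:R) * l%:~R : R).

(* Main.v *)
Require Import Defs.
From HB Require Import structures.
From mathcomp Require Import all_boot all_order all_algebra.
From mathcomp Require Import reals trigo.
From mathcomp Require Import complex.
From mathcomp Require Import ring lra zify.
Import Order.TTheory GRing.Theory Num.Theory.
Local Open Scope ring_scope.

Section Poly.
Variable R : realType.
Variable a : nat -> nat.
Hypothesis ha : forall i : nat, (1 <= i)%N -> (2 <= a i)%N.

Lemma dd0 : dd a 0 = 1%N.
Proof. by rewrite /dd big_geq. Qed.

Lemma ddS m : dd a m.+1 = (dd a m * a m.+1)%N.
Proof. by rewrite /dd big_nat_recr. Qed.

Lemma dd_gt0 m : (0 < dd a m)%N.
Proof.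
elim: m => [|m IH]; first by rewrite dd0.
rewrite ddS muln_gt0 IH /=. have := ha (m.+1) isT. lia.
Qed.

Definition ff (i : nat) : {poly R[i]} := 1 - 'X^(dd a i.-1).

Lemma prod_rec (Q : bool -> bool) (F : nat -> {poly R[i]}) n :
  \prod_(1 <= i < n.+3 | Q (odd (n.+2 - i))) F i =
  (if Q true then F n.+1 else 1) * (if Q false then F n.+2 else 1) *
  \prod_(1 <= i < n.+1 | Q (odd (n - i))) F i.
Proof.
rewrite big_mkcond big_nat_recr // big_nat_recr // subnn.
have -> : (n.+2 - n.+1 = 1)%N by lia.
rewrite -[LHS]mulrA [LHS]mulrC; congr (_ * _).
rewrite [RHS]big_mkcond; apply: eq_big_nat => i /andP[h1 h2].
rewrite (_ : (n.+2 - i = (n - i).+2)%N). by rewrite /= negbK. lia.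
Qed.

Lemma pnum_rec n : pnum R a n.+2 = ff n.+2 * pnum R a n.
Proof. rewrite /pnum (prod_rec negb ff n) /=. by rewrite mul1r. Qed.

Lemma pden_rec n : pden R a n.+2 = ff n.+1 * pden R a n.
Proof. rewrite /pden (prod_rec id ff n) /=. by rewrite mulr1. Qed.

Lemma ff_neq0 i : ff i != 0.
Proof.
apply/negP=> /eqP h. have := congr1 (horner^~ 0) h.
rewrite /ff hornerD hornerN hornerXn hornerC expr0n /=.
have -> : (dd a i.-1 == 0%N) = false by have := dd_gt0 i.-1; lia.
by rewrite horner0 subr0 => /eqP; rewrite oner_eq0.
Qed.

Lemma pden_neq0 n : pden R a n != 0.
Proof. rewrite /pden prodf_seq_neq0; apply/allP => i _; apply/implyP => _; exact: ff_neq0. Qed.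

Definition gg (k : nat) : {poly R[i]} := \sum_(j < a k.+1) 'X^(j * dd a k).

Lemma telesc (m k : nat) : (1 - 'X^m) * \sum_(j < k) 'X^(j * m) = 1 - 'X^(k * m) :> {poly R[i]}.
Proof.
elim: k => [|k IH]; first by rewrite big_ord0 mulr0 mul0n expr0 subrr.
rewrite big_ord_recr /= mulrDr IH mulrBl mul1r -exprD.
have -> : (m + k * m = k.+1 * m)%N by rewrite mulSn.
rewrite addrA subrK. done.
Qed.

Lemma ff_rec k : ff k.+2 = ff k.+1 * gg k.
Proof. by rewrite /ff /gg telesc /= ddS mulnC. Qed.

Lemma pp_eq n : pnum R a n = pden R a n * pp R a n /\ pnum R a n.+1 = pden R a n.+1 * pp R a n.+1.
Proof.
elim: n => [|n [IH1 IH2]].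
  have p0 : pnum R a 0 = 1 by rewrite /pnum big_geq.
  have d0 : pden R a 0 = 1 by rewrite /pden big_geq.
  have d1 : pden R a 1 = 1 by rewrite /pden big_mkcond big_nat1.
  have e1 : pp R a 1 = pnum R a 1 %/ pden R a 1 by [].
  by rewrite p0 d0 e1 d1 divp1 !mul1r.
split => //.
have -> : pp R a n.+2 = pnum R a n.+2 %/ pden R a n.+2 by [].
have e : pnum R a n.+2 = (gg n * pp R a n) * pden R a n.+2.
  by rewrite pnum_rec pden_rec IH1 ff_rec; ring.
by rewrite e mulpK ?pden_neq0 // mulrC.
Qed.

Lemma pp_rec n : pp R a n.+2 = gg n * pp R a n.
Proof.
have [h1 _] := pp_eq n.
rewrite /pp -/(pp R a n) pnum_rec pden_rec h1 ff_rec.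
have -> : ff n.+1 * gg n * (pden R a n * pp R a n) = gg n * pp R a n * (ff n.+1 * pden R a n).
  by rewrite !mulrA; ring.
by rewrite mulpK // mulf_neq0 ?ff_neq0 ?pden_neq0.
Qed.


Lemma ee_add (x y : R) : ee (x + y) = ee x * ee y.
Proof.
rewrite /ee !mulrDr cosD sinD /=. congr Complex; ring.
Qed.

Lemma ee0 : ee (0 : R) = 1.
Proof. by rewrite /ee mulr0 cos0 sin0. Qed.

Lemma ee1 : ee (1 : R) = 1.
Proof. by rewrite /ee mulr1 mulr_natl cos2pi sin2pi. Qed.

Lemma ee_nat (k : nat) : ee (k%:R : R) = 1.
Proof. elim: k => [|k IH]; first exact: ee0. by rewrite -addn1 natrD ee_add IH ee1 mulr1. Qed.

Lemma ee_opp1 (x : R) : ee x = 1 -> ee (- x) = 1.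
Proof. move=> h. have := ee_add x (- x). by rewrite subrr ee0 h mul1r. Qed.

Lemma ee_int (z : int) : ee (z%:~R : R) = 1.
Proof.
case: z => k; first exact: ee_nat.
rewrite NegzE mulrNz; apply: ee_opp1. exact: ee_nat.
Qed.

Lemma ee_exp (x : R) (k : nat) : ee x ^+ k = ee (k%:R * x).
Proof.
elim: k => [|k IH]; first by rewrite expr0 mul0r ee0.
by rewrite exprS IH -ee_add -addn1 natrD mulrDl mul1r addrC.
Qed.

Lemma ee_ne1 (x : R) : 0 < x < 1 -> ee x != 1.
Proof.
case/andP=> x0 x1; apply/negP => /eqP h.
have hc : cos (2 * pi * x) = 1 by move: h; rewrite /ee => -[].
have hp := pi_gt0 R.
have y0 : 0 < 2 * pi * x by rewrite !mulr_gt0.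
have y1 : 2 * pi * x < 2 * pi by rewrite -[X in _ < X]mulr1 ltr_pM2l ?mulr_gt0.
have [yle|ylt] := lerP (2 * pi * x) pi.
  have := @ltr_cos R 0 (2 * pi * x).
  rewrite !in_itv /= lexx (ltW hp) yle (ltW y0) cos0 hc ltxx y0 => /(_ isT isT).
  done.
have := @ltr_cos R 0 (2 * pi - 2 * pi * x).
have e : cos (2 * pi - 2 * pi * x) = 1.
  have c2 : cos (2 * pi) = 1 :> R by rewrite mulr_natl cos2pi.
  have s2 : sin (2 * pi) = 0 :> R by rewrite mulr_natl sin2pi.
  by rewrite cosB c2 s2 mul1r mul0r addr0.
rewrite !in_itv /= lexx (ltW hp) cos0 e ltxx subr_gt0 y1.
have -> : 2 * pi - 2 * pi * x <= pi by lra.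
have -> : 0 <= 2 * pi - 2 * pi * x by lra.
by move/(_ isT isT).
Qed.

Lemma reindex (V : zmodType) (G : nat -> V) m A : (0 < A)%N ->
  \sum_(1 <= b < (m * A).+1 | (A %| b)%N) G b = \sum_(1 <= c < m.+1) G (c * A).
Proof.
move=> hA; elim: m => [|m IH]; first by rewrite mul0n !big_geq.
rewrite (big_cat_nat _ (n := (m * A).+1)) //=; last first.
  by rewrite ltnS leq_pmul2r.
rewrite IH [RHS]big_nat_recr //=; congr (_ + _).
rewrite big_mkcond big_nat_recr /=; last by rewrite mulSn; lia.
rewrite dvdn_mull ?dvdnn //.
rewrite (eq_big_nat _ _ (F2 := fun _ => 0)) ?big1_eq ?add0r // => i /andP[h1 h2].
case: ifP => // /dvdnP[q hq]; subst i.
move: h1 h2; rewrite ltn_pmul2r // ltn_pmul2r //. lia.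
Qed.

Lemma natdivK (c A D : nat) : (0 < A)%N ->
  ((c * A)%:R / (D * A)%:R : R) = c%:R / D%:R.
Proof.
move=> hA; rewrite !natrM invfM mulrACA divff ?mulr1 //.
by rewrite pnatr_eq0 -lt0n.
Qed.

Lemma omega_eq n k : (0 < k < dd a n)%N -> omega R a n k = k%:R / (dd a n)%:R.
Proof.
case/andP=> k0 kD; rewrite /omega.
have hD : (0 : R) < (dd a n)%:R by rewrite ltr0n dd_gt0.
rewrite (@floor_def _ _ 0) ?subr0 //.
rewrite add0r mulr0z mulr1z divr_ge0 ?ler0n ?(ltW hD) //=.
by rewrite ltr_pdivrMr // mul1r ltr_nat.
Qed.

Lemma XX_gen k l : XX R a k l = ((dd a k)%:R)^-1 *
  \sum_(1 <= m < (dd a k).+1) (pp R a k).[ee (m%:R / (dd a k)%:R : R)] *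
     ee ((m%:R / (dd a k)%:R) * l%:~R : R).
Proof.
case: k => [|k] //.
rewrite /XX dd0 big_nat1 /pp hornerC invr1 !mul1r.
by rewrite invr1 mul1r ee_int.
Qed.

Lemma gval k c : (gg k).[ee (c%:R / (dd a k.+1)%:R : R)] =
  if (a k.+1 %| c)%N then (a k.+1)%:R else 0.
Proof.
set A := a k.+1.
have hA : (0 < A)%N by have := ha k.+1 isT; rewrite /A; lia.
have hA' : (A%:R : R) != 0 by rewrite pnatr_eq0 -lt0n.
have hD : ((dd a k)%:R : R) != 0 by rewrite pnatr_eq0 -lt0n dd_gt0.
set w := ee (c%:R / A%:R : R).
rewrite /gg horner_sum.
have e : forall j : 'I_A, ('X^(j * dd a k)).[ee (c%:R / (dd a k.+1)%:R : R)] = w ^+ j.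
  move=> j; rewrite hornerXn !ee_exp; congr ee.
  rewrite ddS -/A !natrM; field; by rewrite hA' hD.
rewrite (eq_bigr _ (fun j _ => e j)).
case: ifP => hdiv.
  have -> : w = 1.
    rewrite /w; case/dvdnP: hdiv => q ->; rewrite natrM mulfK //; exact: ee_nat.
  by rewrite (eq_bigr _ (fun _ _ => expr1n _ _)) sumr_const card_ord.
have wA : w ^+ A = 1 by rewrite /w ee_exp mulrC divfK // ee_nat.
have w1 : w != 1.
  rewrite /w (divn_eq c A) natrD natrM mulrDl mulfK // ee_add ee_nat mul1r.
  apply: ee_ne1.
  have hr : (0 < c %% A)%N by rewrite lt0n; move: hdiv; rewrite /dvdn => ->.
  rewrite divr_gt0 ?ltr0n //= ltr_pdivrMr ?ltr0n // mul1r ltr_nat ltn_pmod //.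
have := subrX1 w A; rewrite wA subrr => /esym/eqP; rewrite mulf_eq0 subr_eq0 (negbTE w1) /=.
by move/eqP.
Qed.

Lemma main_sec k l :
  XX R a k.+2 l =
    ((dd a k.+2)%:R)^-1 *
      \sum_(1 <= b < (dd a k.+2).+1 | ~~ (a k.+2 %| b)%N)
        (pp R a k.+2).[ee (omega R a k.+2 b)] * ee (omega R a k.+2 b * l%:~R)
    + ((a k.+2)%:R)^-1 * XX R a k l.
Proof.
set A := a k.+2. set A1 := a k.+1.
have hA : (0 < A)%N by have := ha k.+2 isT; rewrite /A; lia.
have hA1 : (0 < A1)%N by have := ha k.+1 isT; rewrite /A1; lia.
rewrite XX_gen (XX_gen k).
rewrite (bigID (fun b => (A %| b)%N)) /= addrC mulrDr; congr (_ + _).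
  congr (_ * _); apply: congr_big_nat => // i /and3P[hi h1 h2].
  rewrite omega_eq //; apply/andP; split => //.
  rewrite ltn_neqAle -ltnS h2 andbT; apply/negP => /eqP e.
  by move: hi; rewrite e ddS dvdn_mull.
rewrite -/(pp R a k.+2).
have eqS : \sum_(1 <= i < (dd a k.+2).+1 | (A %| i)%N)
     (pp R a k.+2).[ee (i%:R / (dd a k.+2)%:R : R)] * ee (i%:R / (dd a k.+2)%:R * l%:~R : R)
   = A1%:R * \sum_(1 <= m < (dd a k).+1)
      (pp R a k).[ee (m%:R / (dd a k)%:R : R)] * ee (m%:R / (dd a k)%:R * l%:~R : R).
  rewrite [in X in X = _](ddS k.+1) -/A reindex //.
  rewrite (eq_bigr (fun c => (if (A1 %| c)%N then A1%:R else 0) *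
      ((pp R a k).[ee (c%:R / (dd a k.+1)%:R : R)] * ee (c%:R / (dd a k.+1)%:R * l%:~R : R)))); last first.
    by move=> c _; rewrite natdivK // pp_rec hornerM gval mulrA.
  rewrite (bigID (fun c => (A1 %| c)%N)) /= [X in _ + X]big1 ?addr0; last first.
    by move=> c /negbTE ->; rewrite mul0r.
  rewrite (eq_bigr (fun c => A1%:R * ((pp R a k).[ee (c%:R / (dd a k.+1)%:R : R)] * ee (c%:R / (dd a k.+1)%:R * l%:~R : R)))); last first.
    by move=> c ->.
  rewrite -mulr_sumr; congr (_ * _).
  rewrite [in X in X = _](ddS k) -/A1 reindex //.
  by apply: eq_bigr => m _; rewrite natdivK.
rewrite eqS mulrA mulrA; congr (_ * _).
have hA' : (A%:R : R[i]) != 0 by rewrite pnatr_eq0 -lt0n.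
have hA1' : (A1%:R : R[i]) != 0 by rewrite pnatr_eq0 -lt0n.
have hD : ((dd a k)%:R : R[i]) != 0 by rewrite pnatr_eq0 -lt0n dd_gt0.
rewrite (ddS k.+1) (ddS k) -/A -/A1 !natrM; field.
by rewrite hA' hA1' hD.
Qed.
End Poly.

Theorem lemma4p5 (R : realType) (a : nat -> nat)
    (ha : forall i : nat, (1 <= i)%N -> (2 <= a i)%N)
    (n : nat) (hn : (2 <= n)%N) (l : int) :
  XX R a n l =
    ((dd a n)%:R)^-1 *
      \sum_(1 <= k < (dd a n).+1 | ~~ (a n %| k)%N)
        (pp R a n).[ee (omega R a n k)] * ee (omega R a n k * l%:~R)
    + ((a n)%:R)^-1 * XX R a (n - 2) l.
Proof.
case: n hn => [|[|k]] // _.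
have -> : (k.+2 - 2 = k)%N by lia.
exact: main_sec.
Qed.
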